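(* Let $E_1,\dots,E_N$ be a symmetric sequence of events with correlation functions $G_k$ and correlation coefficients $C_k$. Then for every $k$ with $2\le k\le N$ and all $r_1,\dots,r_k\in\{0,1\}$, $$G_k(r_1,\dots,r_k)=N^{-k}C_k\prod_{l=1}^{k}(-1)^{r_l+1}.$$
   Context: $\mathbbm{1}_E$ is the indicator function of an event $E$. A finite sequence of events $E_1,\dots,E_N$ on a common probability space is called symmetric if for all $r_1,\dots,r_N\in\{0,1\}$ and all permutations $\sigma$ of $\{1,\dots,N\}$, $P(\mathbbm{1}_{E_1}=r_1,\dots,\mathbbm{1}_{E_N}=r_N)=P(\mathbbm{1}_{E_1}=r_{\sigma(1)},\dots,\mathbbm{1}_{E_N}=r_{\sigma(N)})$. For $1\le k\le N$ the probability function of order $k$ is $P_k(r_1,\dots,r_k):=\sum_{r_{k+1},\dots,r_N\in\{0,1\}}P(\mathbbm{1}_{E_1}=r_1,\dots,\mathbbm{1}_{E_N}=r_N)$. The correlation functions $G_k:\{0,1\}^k\to\mathbb{R}$ are defined by $G_1:=P_1$ and, recursively for $1<k\le N$, $$G_k(r_1,\dots,r_k):=P_k(r_1,\dots,r_k)-\sum_{\sigma}\sum_{l=1}^{k-1}\frac{1}{(l-1)!\,(k-l)!}G_l(r_1,r_{\sigma(2)},\dots,r_{\sigma(l)})\,P_{k-l}(r_{\sigma(l+1)},\dots,r_{\sigma(k)}),$$ where $\sigma$ runs over all permutations of $\{2,\dots,k\}$. The correlation coefficient of order $k$ is $C_k:=N^kG_k(1,\dots,1)$. *)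

(* Defs.v *)
From HB Require Import structures.
From mathcomp Require Import all_boot all_order all_algebra all_fingroup.
Set Implicit Arguments. Unset Strict Implicit. Unset Printing Implicit Defensive.
Import Order.TTheory GRing.Theory Num.Theory.
Local Open Scope ring_scope.

(* A finite probability space: sample space Omega, mass function w
   (w >= 0, sum w = 1), and events E : 'I_N -> {set Omega}
   (E i is the event E_{i+1} of the paper, 0-based indexing). *)

Section Corr.
Variables (R : realFieldType) (Omega : finType) (w : Omega -> R) (N : nat)
  (E : 'I_N -> {set Omega}).

Definition Pfull (r : {ffun 'I_N -> bool}) : R :=
  \sum_(om : Omega | [forall i : 'I_N, (om \in E i) == r i]) w om.

Definition symmetric_events : Prop :=
  forall (r : {ffun 'I_N -> bool}) (s : 'S_N),
    Pfull r = Pfull [ffun i => r (s i)].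

Definition Pk (r : seq bool) : R :=
  \sum_(r' : {ffun 'I_N -> bool} |
          [forall i : 'I_N, (i < size r)%N ==> (r' i == nth false r i)])
    Pfull r'.

(* For r = [:: r_1; ...; r_k], sigma ranges over permutations of {2..k},
   encoded as s : 'S_(k-1) acting on 0-based positions 1..k-1 of r. *)
Fixpoint Gfuel (fuel : nat) (r : seq bool) : R :=
  match fuel with
  | 0%N => Pk r
  | fuel'.+1 =>
      let k := size r in
      let r1 := head false r in
      Pk r -
      \sum_(s : 'S_(k.-1))
        \sum_(1 <= l < k)
          let rs := [seq nth false r (s j).+1 | j <- enum 'I_(k.-1)] in
          ((l.-1)`!%:R * (k - l)`!%:R)^-1 *
          Gfuel fuel' (r1 :: take l.-1 rs) * Pk (drop l.-1 rs)
  end.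

Definition G (r : seq bool) : R := Gfuel (size r) r.

Definition Ccoef (k : nat) : R := (N%:R) ^+ k * G (nseq k true).

End Corr.

(* Main.v *)
Require Import Defs.
From HB Require Import structures.
From mathcomp Require Import all_boot all_order all_algebra all_fingroup.
From mathcomp Require Import ring lra zify.
Set Implicit Arguments. Unset Strict Implicit. Unset Printing Implicit Defensive.
Import Order.TTheory GRing.Theory Num.Theory.
Local Open Scope ring_scope.

Section Proof.
Variables (R : realFieldType) (Omega : finType) (w : Omega -> R) (N : nat)
  (E : 'I_N -> {set Omega}).
Hypothesis w_sum1 : \sum_(om : Omega) w om = 1.
Hypothesis hsym : symmetric_events w E.

Definition ext (a : seq bool) (r' : {ffun 'I_N -> bool}) :=
  [forall i : 'I_N, (i < size a)%N ==> (r' i == nth false a i)].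

Lemma PkE a : Pk w E a = \sum_(r' | ext a r') Pfull w E r'.
Proof. by []. Qed.

Lemma Pk_nil : Pk w E [::] = 1.
Proof.
rewrite PkE (eq_bigl predT); last by move=> r; apply/forallP => i.
rewrite /Pfull.
under eq_bigr do rewrite big_mkcond.
rewrite exchange_big /= -w_sum1; apply: eq_bigr => om _.
rewrite -big_mkcond /=.
rewrite (eq_bigl (pred1 [ffun i => om \in E i])) ?big_pred1_eq //.
move=> r /=; apply/forallP/eqP => [H|->]; last by move=> i; rewrite ffunE.
by apply/ffunP => i; rewrite ffunE; apply/esym/eqP/H.
Qed.

Lemma Pk_rcons a : (size a < N)%N ->
  Pk w E (rcons a false) + Pk w E (rcons a true) = Pk w E a.
Proof.
move=> ha; pose i0 := Ordinal ha.
rewrite !PkE [in RHS](bigID (fun r : {ffun _ -> bool} => r i0)) /= addrC; congr (_ + _); apply: eq_bigl => r.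
- apply/forallP/andP => [H|[/forallP H1 H2] i].
    split; last by have := H i0; rewrite size_rcons ltnSn nth_rcons ltnn eqxx /= => /eqP ->.
    apply/forallP => i; apply/implyP => hi; have := H i.
    by rewrite size_rcons ltnS ltnW //= nth_rcons hi.
  rewrite size_rcons ltnS nth_rcons; apply/implyP; rewrite leq_eqVlt => /orP[/eqP ei|hi].
    have -> : i = i0 by apply: val_inj.
    by rewrite /= ltnn eqxx (negbTE H2).
  by rewrite hi; have := H1 i; rewrite hi.
- apply/forallP/andP => [H|[/forallP H1 H2] i].
    split; last by have := H i0; rewrite size_rcons ltnSn nth_rcons ltnn eqxx /= => /eqP ->.
    apply/forallP => i; apply/implyP => hi; have := H i.
    by rewrite size_rcons ltnS ltnW //= nth_rcons hi.
  rewrite size_rcons ltnS nth_rcons; apply/implyP; rewrite leq_eqVlt => /orP[/eqP ei|hi].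
    have -> : i = i0 by apply: val_inj.
    by rewrite /= ltnn eqxx H2.
  by rewrite hi; have := H1 i; rewrite hi.
Qed.


Definition ff (s : seq bool) : {ffun 'I_N -> bool} := [ffun i : 'I_N => nth false s i].

Lemma Pfull_perm s t : size t = N -> perm_eq s t -> Pfull w E (ff s) = Pfull w E (ff t).
Proof.
move=> st pst.
have /eqP st' := st.
pose tt : N.-tuple bool := Tuple st'.
have : perm_eq s tt by [].
case/tuple_permP => p sE.
rewrite (hsym (ff t) p); congr Pfull; apply/ffunP => i; rewrite !ffunE.
have -> : nth false s i = tnth [tuple tnth tt (p i0) | i0 < N] i.
  by rewrite (tnth_nth false) -sE.
by rewrite tnth_mktuple (tnth_nth false).
Qed.

Definition setp (a : seq bool) (r : {ffun 'I_N -> bool}) : {ffun 'I_N -> bool} :=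
  [ffun i : 'I_N => if (i < size a)%N then nth false a i else r i].

Lemma Pk_perm a b : (size a <= N)%N -> perm_eq a b -> Pk w E a = Pk w E b.
Proof.
move=> ha pab.
have sab : size a = size b by apply: perm_size.
rewrite !PkE [in RHS](reindex_onto (setp b) (setp a)); last first.
  move=> r /forallP H; apply/ffunP => i; rewrite !ffunE -sab.
  case: ifP => hi; first by have := H i; rewrite -sab hi /= => /eqP ->.
  by rewrite hi.
apply: eq_big => r.
  apply/idP/andP => [/forallP H|[_ /eqP <-]]; last first.
    by apply/forallP => i; rewrite !ffunE; case: ifP => //= ->.
  split; first by apply/forallP => i; rewrite ffunE -sab; apply/implyP => ->.
  apply/eqP/ffunP => i; rewrite !ffunE -sab; case: ifP => hi.
    by have := H i; rewrite hi /= => /eqP ->.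
  by rewrite hi.
move=> /forallP H.
pose g := [seq r i | i <- enum 'I_N].
have sg : size g = N by rewrite size_map size_enum_ord.
have nthg (i : 'I_N) : nth false g i = r i.
  by rewrite (nth_map i) ?size_enum_ord // nth_ord_enum.
have rE : r = ff g by apply/ffunP => i; rewrite ffunE nthg.
have tg : take (size a) g = a.
  apply: (@eq_from_nth _ false); first by rewrite size_takel ?sg.
  move=> j; rewrite size_takel ?sg // => hj.
  rewrite nth_take //; have hjN : (j < N)%N by apply: leq_trans ha.
  by have := H (Ordinal hjN); rewrite /= hj => /eqP <-; rewrite (nthg (Ordinal hjN)).
have -> : setp b r = ff (b ++ drop (size a) g).
  apply/ffunP => i; rewrite !ffunE nth_cat -sab; case: ifP => // hi.
  by rewrite nth_drop subnKC ?nthg // leqNgt hi.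
rewrite rE; apply: Pfull_perm; first by rewrite size_cat size_drop sg -sab subnKC.
by rewrite -{1}(cat_take_drop (size a) g) tg perm_cat2r.
Qed.


Lemma GfuelS f r : Gfuel w E f.+1 r = Pk w E r -
  \sum_(s : 'S_((size r).-1)) \sum_(1 <= l < size r)
     (((l.-1)`!%:R * (size r - l)`!%:R)^-1 *
      Gfuel w E f (head false r :: take l.-1 [seq nth false r (s j).+1 | j <- enum 'I_((size r).-1)]) *
      Pk w E (drop l.-1 [seq nth false r (s j).+1 | j <- enum 'I_((size r).-1)])).
Proof. by []. Qed.

Lemma Gfuel_small f r : (size r <= 1)%N -> Gfuel w E f r = Pk w E r.
Proof.
move=> h; case: f => [|f] //; rewrite GfuelS big1 ?subr0 // => s _.
by rewrite big_geq.
Qed.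

Lemma Gfuel_indep f g r : (size r <= f.+1)%N -> (size r <= g.+1)%N ->
  Gfuel w E f r = Gfuel w E g r.
Proof.
elim: f g r => [|f IH] g r hf hg; first by rewrite Gfuel_small // Gfuel_small.
case: g hg => [|g] hg; first by rewrite Gfuel_small // Gfuel_small.
rewrite !GfuelS; congr (_ - _); apply: eq_bigr => s _.
apply: eq_big_nat => l /andP[l1 l2]; congr (_ * _ * _); apply: IH.
- rewrite /= size_take_min ltnS; apply: leq_trans (geq_minl _ _) _.
  by rewrite -ltnS prednK // -ltnS; apply: leq_trans l2 hf.
- rewrite /= size_take_min ltnS; apply: leq_trans (geq_minl _ _) _.
  by rewrite -ltnS prednK // -ltnS; apply: leq_trans l2 hg.
Qed.

Definition ap n (s : 'S_n) (x : seq bool) := [seq nth false x (s j) | j <- enum 'I_n].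
Definition cf n m : R := ((m`!)%:R * ((n - m)`!)%:R)^-1.

Lemma G_cons n r1 x : size x = n -> G w E (r1 :: x) = Pk w E (r1 :: x) -
  \sum_(s : 'S_n) \sum_(m < n) cf n m * G w E (r1 :: take m (ap s x)) * Pk w E (drop m (ap s x)).
Proof.
move=> <-; rewrite {1}/G GfuelS; congr (_ - _); apply: eq_bigr => s _.
rewrite big_add1 big_mkord; apply: eq_bigr => m _.
have hm : (m < size x)%N by exact: ltn_ord m.
have hsz : forall y : seq bool, (size (r1 :: take m y) <= (size x).+1)%N.
  by move=> y; rewrite /= ltnS size_take_min; apply: leq_trans (geq_minl _ _) _; apply: ltnW.
congr (_ * _ * _); rewrite /G; apply: Gfuel_indep; [exact: hsz | by []].
Qed.


Lemma size_ap n (s : 'S_n) x : size (ap s x) = n.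
Proof. by rewrite size_map size_enum_ord. Qed.

Lemma nth_ap n (s : 'S_n) x (i : 'I_n) : nth false (ap s x) i = nth false x (s i).
Proof. by rewrite /ap (nth_map i) ?size_enum_ord // nth_ord_enum. Qed.

Lemma ap_perm n (s : 'S_n) x : size x = n -> perm_eq (ap s x) x.
Proof.
move=> hx.
have -> : ap s x = [seq nth false x (val i) | i <- [seq s j | j <- enum 'I_n]].
  by rewrite -map_comp.
have pe : perm_eq [seq s j | j <- enum 'I_n] (enum 'I_n).
  apply: uniq_perm; first by rewrite map_inj_uniq ?enum_uniq //; apply: perm_inj.
    exact: enum_uniq.
  move=> i; rewrite mem_enum inE; apply/mapP; exists (s^-1 i)%g; first by rewrite mem_enum.
  by rewrite permKV.
apply: (perm_trans (perm_map _ pe)).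
rewrite (map_comp (nth false x) val) val_enum_ord -hx.
by rewrite map_nth_iota0 // take_size.
Qed.

Lemma apM n (s t : 'S_n) x : ap s (ap t x) = ap (s * t)%g x.
Proof.
by apply: eq_map => j; rewrite nth_ap permM.
Qed.

Lemma perm_ap x x' : perm_eq x x' -> exists t : 'S_(size x), x' = ap t x.
Proof.
move=> pxx; have : perm_eq x' (in_tuple x) by rewrite perm_sym.
case/tuple_permP => p Hp; exists p; rewrite Hp /ap /=.
by apply: eq_map => j; rewrite (tnth_nth false).
Qed.

Lemma ap_lift n' (p : 'I_n'.+1) (s' : 'S_n') y b : size y = n' ->
  ap (lift_perm p ord_max s') (rcons y b) = take p (ap s' y) ++ b :: drop p (ap s' y).
Proof.
move=> hy; set z := ap s' y.
have hz : size z = n' by rewrite size_ap.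
have hp : (p <= n')%N by rewrite -ltnS.
apply: (@eq_from_nth _ false).
  by rewrite size_ap size_cat size_takel ?hz //= size_drop hz addnS subnKC.
move=> k; rewrite size_ap => hk; pose k' := Ordinal hk.
have -> : k = k' by [].
rewrite nth_ap nth_cat size_takel ?hz //.
case: (unliftP p k') => [k''|] ->.
  rewrite lift_perm_lift lift_max /= nth_rcons hy ltn_ord /bump.
  case: (leqP p k'') => hpk.
    rewrite add1n ltnNge (leq_trans hpk) //= subSn //= nth_drop subnKC //.
    by rewrite -(nth_ap s' y k'').
  by rewrite add0n hpk nth_take // -(nth_ap s' y k'').
by rewrite lift_perm_id ltnn subnn /= nth_rcons hy ltnn eqxx.
Qed.


Lemma sum_lift_perm n (F : 'S_n.+1 -> R) i0 j0 :
  \sum_(s : 'S_n.+1 | s i0 == j0) F s = \sum_(s : 'S_n) F (lift_perm i0 j0 s).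
Proof.
rewrite (reindex (lift_perm i0 j0)); last first.
  pose ulsf i (s : 'S_n.+1) k := odflt k (unlift (s i) (s (lift i k))).
  have ulsfK i (s : 'S_n.+1) k: lift (s i) (ulsf i s k) = s (lift i k).
    rewrite /ulsf; have:= neq_lift i k.
    by rewrite -(can_eq (permK s)) => /unlift_some[] ? ? ->.
  have inj_ulsf: injective (ulsf i0 _).
    move=> s; apply: can_inj (ulsf (s i0) s^-1%g) _ => k'.
    by rewrite {1}/ulsf ulsfK !permK liftK.
  exists (fun s => perm (inj_ulsf s)) => [s _ | s].
    by apply/permP=> k'; rewrite permE /ulsf lift_perm_lift lift_perm_id liftK.
  move/(s _ =P _) => si0; apply/permP=> k.
  case: (unliftP i0 k) => [k'|] ->; rewrite ?lift_perm_id //.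
  by rewrite lift_perm_lift -si0 permE ulsfK.
by apply: eq_bigl => s; rewrite lift_perm_id eqxx.
Qed.

Lemma Pk_flip_sum a c : (size a + size c < N)%N ->
  Pk w E (a ++ false :: c) + Pk w E (a ++ true :: c) = Pk w E (a ++ c).
Proof.
move=> h.
have pe b : perm_eq (a ++ b :: c) (rcons (a ++ c) b).
  by rewrite -cats1 -catA perm_cat2l perm_sym cats1 perm_rcons.
have sz b : (size (a ++ b :: c) <= N)%N by rewrite size_cat /= addnS.
rewrite (Pk_perm (sz false) (pe false)) (Pk_perm (sz true) (pe true)).
by apply: Pk_rcons; rewrite size_cat.
Qed.

Lemma G_tail_perm r1 x x' : (size x < N)%N -> perm_eq x x' ->
  G w E (r1 :: x) = G w E (r1 :: x').
Proof.
move=> hx /perm_ap [t ->].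
rewrite (G_cons r1 (erefl (size x))) (G_cons r1 (size_ap t x)).
congr (_ - _).
  by apply: Pk_perm => //; rewrite perm_cons perm_sym ap_perm.
rewrite [LHS](reindex_inj (mulIg t)); apply: eq_bigr => s _.
by rewrite apM.
Qed.


Lemma drop_catl (T : Type) m (t s : seq T) : (m <= size t)%N -> drop m (t ++ s) = drop m t ++ s.
Proof.
move=> h; rewrite drop_cat; case: ltnP => // h2.
have e : m = size t by apply/eqP; rewrite eqn_leq h h2.
by rewrite e subnn drop0 drop_size.
Qed.

Lemma count_sum n m (X : R) : (m <= n)%N ->
  \sum_(p < n) (if (m <= p)%N then X else 0) = X *+ (n - m).
Proof.
move=> hm.
rewrite -(big_mkord xpredT (fun p => if (m <= p)%N then X else 0)).
rewrite (big_cat_nat (leq0n m) hm) /= big_nat_cond big1 ?add0r; last first.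
  by move=> i /andP[/andP[_ hi] _]; rewrite leqNgt hi.
rewrite -sumr_const_nat; apply: eq_big_nat => i /andP[hi _]; by rewrite hi.
Qed.

Lemma fact_neq0 n : (n`!)%:R != 0 :> R.
Proof. by rewrite pnatr_eq0 -lt0n fact_gt0. Qed.

Lemma cf_step n m : (m <= n)%N -> cf n.+1 m *+ (n.+1 - m) = cf n m.
Proof.
move=> hm; rewrite /cf subSn // factS natrM -[in RHS](mulr1 (_^-1)).
have h1 := fact_neq0 m; have h2 := fact_neq0 (n - m).
have h3 : ((n - m).+1)%:R != 0 :> R by rewrite pnatr_eq0.
rewrite -mulr_natr; field; by rewrite h1 h2 addrC natr1 h3.
Qed.

Lemma cf_last n : cf n.+1 n = (n`!%:R)^-1.
Proof. by rewrite /cf subSnn /= mulr1. Qed.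

Lemma cf0 n : cf n 0 = (n`!%:R)^-1.
Proof. by rewrite /cf subn0 fact0 mul1r. Qed.


Lemma G_single b : G w E [:: b] = Pk w E [:: b].
Proof.
by rewrite (@G_cons 0 b [::] erefl) big1 ?subr0 // => s _; rewrite big_ord0.
Qed.

Lemma sum_const_perm n (X : R) : \sum_(s : 'S_n) X = X *+ n`!.
Proof. by rewrite sumr_const card_Sn. Qed.

Lemma headflip_step n x : size x = n.+1 -> (n.+2 <= N)%N ->
  (forall y, (1 <= size y <= n)%N -> G w E (false :: y) + G w E (true :: y) = 0) ->
  G w E (false :: x) + G w E (true :: x) = 0.
Proof.
move=> hx hN IH.
rewrite !(G_cons _ hx) addrACA -opprD.
have -> : Pk w E (false :: x) + Pk w E (true :: x) = Pk w E x.
  by rewrite (@Pk_flip_sum [::] x) //= hx.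
rewrite -big_split /=.
rewrite (eq_bigr (fun s : 'S_n.+1 => cf n.+1 0 * Pk w E x)); last first.
  move=> s _; rewrite -big_split big_ord_recl /= big1 ?addr0; last first.
    move=> i _; rewrite -!mulrA -mulrDr -mulrDl.
    rewrite IH ?mul0r ?mulr0 //= size_take_min size_ap.
    by rewrite /bump add1n minnSS /= (leq_ltn_trans (geq_minl _ _) (ltn_ord i)).
  rewrite !take0 drop0 !G_single -!mulrA -mulrDr -mulrDl.
  rewrite (@Pk_flip_sum [::] [::]) /=; last by apply: leq_ltn_trans hN.
  rewrite Pk_nil mul1r; congr (_ * _); apply: Pk_perm; first by rewrite size_ap (ltnW hN).
  by apply: ap_perm.
rewrite sum_const_perm cf0 -(mulr_natr (_ * Pk w E x)) mulrAC mulVf ?fact_neq0 // mul1r.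
by rewrite subrr.
Qed.


Lemma ins_pair r1 z (p m : nat) : (p <= size z)%N -> (m <= size z)%N -> (size z < N)%N ->
  (forall u v, (size u + size v < size z)%N ->
     G w E (r1 :: u ++ false :: v) + G w E (r1 :: u ++ true :: v) = 0) ->
  G w E (r1 :: take m (take p z ++ false :: drop p z)) *
    Pk w E (drop m (take p z ++ false :: drop p z)) +
  G w E (r1 :: take m (take p z ++ true :: drop p z)) *
    Pk w E (drop m (take p z ++ true :: drop p z)) =
  if (m <= p)%N then G w E (r1 :: take m z) * Pk w E (drop m z) else 0.
Proof.
move=> hp hm hz IH.
have ht : size (take p z) = p by rewrite size_takel.
case: leqP => hmp.
  rewrite !takel_cat ?ht // take_takel // !drop_catl ?ht // -mulrDr.
  rewrite Pk_flip_sum; last first.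
    rewrite size_drop ht size_drop; apply: leq_ltn_trans hz.
    by rewrite addnBAC // subnKC // leq_subr.
  by rewrite -drop_catl ?ht // cat_take_drop.
have e : (m - p = (m - p.+1).+1)%N by lia.
rewrite !take_cat !drop_cat ht ltnNge (ltnW hmp) /= e /= -mulrDl IH ?mul0r //.
rewrite ht size_take_min size_drop; lia.
Qed.


Lemma sumD2 (I : finType) (F1 F2 : I -> R) :
  \sum_i F1 i + \sum_i F2 i = \sum_i (F1 i + F2 i).
Proof. by rewrite big_split. Qed.

Lemma tail_last n' r1 y : size y = n' -> (n'.+2 <= N)%N ->
  (forall u v, (size u + size v < n')%N ->
     G w E (r1 :: u ++ false :: v) + G w E (r1 :: u ++ true :: v) = 0) ->
  G w E (r1 :: rcons y false) + G w E (r1 :: rcons y true) = 0.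
Proof.
move=> hy hN IH.
have hx b : size (rcons y b) = n'.+1 by rewrite size_rcons hy.
rewrite !(G_cons _ (hx _)) addrACA -opprD.
have -> : Pk w E (r1 :: rcons y false) + Pk w E (r1 :: rcons y true) = Pk w E (r1 :: y).
  have := @Pk_flip_sum (r1 :: y) [::]; rewrite !cats1 cats0 /= => -> //.
  by rewrite hy addn0.
rewrite -big_split /=.
rewrite (partition_big (fun s : 'S_n'.+1 => (s^-1)%g ord_max) xpredT) //=.
rewrite (eq_bigr (fun p : 'I_n'.+1 => \sum_(s' : 'S_n') \sum_(m < n'.+1)
   cf n'.+1 m * (if (m <= p)%N then G w E (r1 :: take m (ap s' y)) *
                   Pk w E (drop m (ap s' y)) else 0))); last first.
  move=> p _.
  rewrite (eq_bigl (fun s : 'S_n'.+1 => s p == ord_max)); last first.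
    by move=> s /=; apply/eqP/eqP => [<-|<-]; rewrite ?permKV ?permK.
  rewrite sum_lift_perm; apply: eq_bigr => s' _.
  rewrite sumD2; apply: eq_bigr => m _.
  rewrite !ap_lift // -!mulrA -mulrDr; congr (_ * _); apply: ins_pair; rewrite ?size_ap //.
  - by rewrite -ltnS.
  - by rewrite -ltnS.
  - by apply: leq_ltn_trans hN.
rewrite exchange_big /=.
rewrite (eq_bigr (fun s' : 'S_n' => \sum_(m < n') cf n' m * G w E (r1 :: take m (ap s' y)) *
   Pk w E (drop m (ap s' y)) + (n'`!%:R)^-1 * G w E (r1 :: y))); last first.
  move=> s' _; rewrite exchange_big /=.
  rewrite (eq_bigr (fun m : 'I_n'.+1 => cf n'.+1 m * ((G w E (r1 :: take m (ap s' y)) *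
     Pk w E (drop m (ap s' y))) *+ (n'.+1 - m)))); last first.
    by move=> m _; rewrite -big_distrr /= count_sum // ltnW.
  rewrite big_ord_recr /=; congr (_ + _).
    apply: eq_bigr => m _; rewrite mulrnAr -mulrnAl cf_step ?mulrA //.
    exact: ltnW.
  rewrite subSnn mulr1n cf_last take_oversize ?size_ap // drop_oversize ?size_ap //.
  rewrite Pk_nil mulr1; congr (_ * _); apply: G_tail_perm; last by apply: ap_perm.
  by rewrite size_ap; apply: leq_ltn_trans hN.
rewrite big_split /= sum_const_perm -(mulr_natr (_ * G w E (r1 :: y))) mulrAC mulVf ?fact_neq0 // mul1r.
have hG := G_cons r1 hy.
rewrite [X in _ - (X + _)](_ : _ = Pk w E (r1 :: y) - G w E (r1 :: y)); last first.
  by rewrite hG opprB addrC subrK.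
by rewrite subrK subrr.
Qed.


Lemma perm_mid (u v : seq bool) b : perm_eq (u ++ b :: v) (rcons (u ++ v) b).
Proof. by rewrite -cats1 -catA perm_cat2l perm_sym cats1 perm_rcons. Qed.

Lemma flips k : (2 <= k <= N)%N ->
  (forall x, size x = k.-1 -> G w E (false :: x) + G w E (true :: x) = 0) /\
  (forall r1 u v, (size u + size v).+2 = k ->
     G w E (r1 :: u ++ false :: v) + G w E (r1 :: u ++ true :: v) = 0).
Proof.
elim/ltn_ind: k => k IH /andP[k2 kN].
case: k k2 kN IH => [|[|n]] // _ kN IH.
split.
  move=> x hx; apply: (headflip_step hx kN) => y /andP[y1 yn].
  have h1 : ((size y).+1 < n.+2)%N by rewrite !ltnS.
  have h2 : (2 <= (size y).+1 <= N)%N.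
    by rewrite ltnS y1 /=; apply: leq_trans kN; rewrite !ltnS ltnW.
  by case: (IH _ h1 h2) => H _; apply: H.
move=> r1 u v huv.
have hs b : (size (u ++ b :: v) < N)%N.
  by rewrite size_cat /= addnS; apply: leq_trans kN; rewrite ltnS -ltnS huv.
rewrite (G_tail_perm r1 (hs false) (perm_mid u v false)).
rewrite (G_tail_perm r1 (hs true) (perm_mid u v true)).
apply: (@tail_last n) => //; first by rewrite size_cat; case: huv.
move=> u' v' h.
have h1 : ((size u' + size v').+2 < n.+2)%N by rewrite !ltnS.
have h2 : (2 <= (size u' + size v').+2 <= N)%N.
  by rewrite /=; apply: leq_trans kN; rewrite !ltnS ltnW.
by case: (IH _ h1 h2) => _ H; apply: H.
Qed.

Lemma G_sign k r : (2 <= k <= N)%N -> size r = k ->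
  G w E r = (\prod_(b <- r) (-1 : R) ^+ (nat_of_bool b).+1) * G w E (nseq k true).
Proof.
move=> hk hr; have [Hh Ht] := flips hk.
case: r hr => [|r1 x] hr; first by move: hk; rewrite -hr.
have stepA : forall x' a, size a + size x' = k.-1 ->
  G w E (r1 :: a ++ x') = (\prod_(b <- x') (-1 : R) ^+ (nat_of_bool b).+1) *
                          G w E (r1 :: a ++ nseq (size x') true).
  elim=> [|b x' IHx] a h; first by rewrite big_nil mul1r.
  rewrite -cat_rcons (IHx (rcons a b)); last by rewrite size_rcons; move: h => /=; lia.
  have e : G w E (r1 :: a ++ b :: nseq (size x') true) =
     (-1 : R) ^+ (nat_of_bool b).+1 * G w E (r1 :: a ++ true :: nseq (size x') true).
    move: h; case: b => h.
      by rewrite [(nat_of_bool true).+1]/= expr2 mulN1r opprK mul1r.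
    rewrite [(nat_of_bool false).+1]/= expr1 mulN1r; apply/eqP; rewrite -addr_eq0; apply/eqP.
    apply: Ht; rewrite size_nseq; move: h; rewrite [size (_ :: _)]/=; lia.
  have -> : nseq (size (b :: x')) true = true :: nseq (size x') true by [].
  by rewrite big_cons cat_rcons e mulrCA -mulrA.
have e : G w E (r1 :: nseq (size x) true) =
     (-1 : R) ^+ (nat_of_bool r1).+1 * G w E (true :: nseq (size x) true).
  move: hr; case: r1 {stepA} => hr.
    by rewrite [(nat_of_bool true).+1]/= expr2 mulN1r opprK mul1r.
  rewrite [(nat_of_bool false).+1]/= expr1 mulN1r; apply/eqP; rewrite -addr_eq0; apply/eqP; apply: Hh.
  by rewrite size_nseq -hr.
rewrite (stepA x [::]); last by rewrite -hr.
have -> : nseq k true = true :: nseq (size x) true by rewrite -hr.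
by rewrite ?cat0s e big_cons mulrCA -mulrA.
Qed.

End Proof.

Unset Implicit Arguments.
Set Strict Implicit.

Theorem mainTheorem5 (R : realFieldType) (Omega : finType) (w : Omega -> R)
  (N : nat) (E : 'I_N -> {set Omega})
  (w_ge0 : forall om, 0 <= w om) (w_sum1 : \sum_(om : Omega) w om = 1)
  (hsym : symmetric_events w E) :
  forall (k : nat), (2 <= k <= N)%N ->
  forall (r : seq bool), size r = k ->
    G w E r = (N%:R) ^- k * Ccoef w E k *
              \prod_(b <- r) (-1 : R) ^+ (nat_of_bool b).+1.
Proof.
move=> k hk r hr.
have hN : (N%:R ^+ k : R) != 0.
  rewrite expf_neq0 // pnatr_eq0 -lt0n.
  by case/andP: hk => h1 h2; apply: leq_trans h2; apply: leq_trans h1.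
rewrite (G_sign w_sum1 hsym hk hr) /Ccoef mulrA (mulVf hN) mul1r.
exact: mulrC.
Qed.
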